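(* Under the standing assumptions the following identities hold: \begin{align*} Q_{2,j}(a)&=(-1)^j\,\mathbf m_0^{-1}\mathbf l_0^{-1}\mathbf m_1^{-1}\mathbf l_1^{-1}\cdots\mathbf l_{j-1}^{-1}\mathbf m_j^{-1}, && 0\le j\le n-1,\\ \Gamma_{1,j}(a)&=(-1)^j\,\mathbf m_0^{-1}\mathbf l_0^{-1}\mathbf m_1^{-1}\mathbf l_1^{-1}\cdots\mathbf m_{j-1}^{-1}\mathbf l_{j-1}^{-1}, && 1\le j\le n,\\ P_{2,j}(a)&=(-1)^j\,\mathbf m_0^{-1}\mathbf l_0^{-1}\cdots\mathbf l_{j-1}^{-1}\mathbf m_j^{-1}\,(\mathbf m_0+\mathbf m_1+\cdots+\mathbf m_j), && 1\le j\le n-1,\\ \Theta_{1,j}(a)&=(-1)^j\,\mathbf m_0^{-1}\mathbf l_0^{-1}\cdots\mathbf m_{j-1}^{-1}\mathbf l_{j-1}^{-1}\,(s_0+\mathbf l_0+\cdots+\mathbf l_{j-1}), && 1\le j\le n. \end{align*}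
   Context: Let $q,n\in\mathbb N$ and let $a<b$ be real numbers. All matrices are complex; $I_q$, $0_q$ are the $q\times q$ identity and zero matrices. Let $s_0,\dots,s_{2n+1}$ be Hermitian $q\times q$ matrices and set $\widehat s_j:=-ab\,s_j+(a+b)s_{j+1}-s_{j+2}$. Define $H_{1,j}:=(s_{l+k})_{l,k=0}^j$, $H_{2,j}:=(\widehat s_{l+k})_{l,k=0}^{j}$, $K_{1,j}:=(bs_{l+k}-s_{l+k+1})_{l,k=0}^{j}$, $K_{2,j}:=(-as_{l+k}+s_{l+k+1})_{l,k=0}^j$. Standing assumption: $H_{1,n},H_{2,n-1},K_{1,n},K_{2,n}$ are positive definite. Let $T_0:=0_q$ and, for $j\ge1$, let $T_j$ be the $(j+1)\times(j+1)$ block matrix (blocks $q\times q$) with $I_q$ in block positions $(l+1,l)$, $l=0,\dots,j-1$, and $0_q$ elsewhere; $R_j(z):=(I_{(j+1)q}-zT_j)^{-1}$; $v_j:=\mathrm{col}(I_q,0_q,\dots,0_q)\in\mathbb C^{(j+1)q\times q}$. Let $u_{2,0}:=-(a+b)s_0+s_1$, $u_{2,j}:=\mathrm{col}(u_{2,0},-\widehat s_0,\dots,-\widehat s_{j-1})$, $\widetilde u_{1,j}:=\mathrm{col}(s_0,s_1-bs_0,\dots,s_j-bs_{j-1})$; for $j\ge1$, $Y_{2,j}:=\mathrm{col}(\widehat s_j,\dots,\widehat s_{2j-1})$, $\widetilde Y_{1,j}:=\mathrm{col}(bs_j-s_{j+1},\dots,bs_{2j-1}-s_{2j})$. Polynomials: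 $P_{2,0}:=I_q$, $Q_{2,0}(z):=-(u_{2,0}+zs_0)$, $\Gamma_{1,0}:=I_q$, $\Theta_{1,0}:=s_0$; for $j\ge1$: $P_{2,j}(z):=(-Y_{2,j}^*H_{2,j-1}^{-1},I_q)R_j(z)v_j$, $Q_{2,j}(z):=-(-Y_{2,j}^*H_{2,j-1}^{-1},I_q)R_j(z)(u_{2,j}+zv_js_0)$, $\Gamma_{1,j}(z):=(-\widetilde Y_{1,j}^*K_{1,j-1}^{-1},I_q)R_j(z)v_j$, $\Theta_{1,j}(z):=(-\widetilde Y_{1,j}^*K_{1,j-1}^{-1},I_q)R_j(z)\widetilde u_{1,j}$. DSM parameters: $\lambda_j:=(u_{2,j}+av_js_0)^*R_j(a)^*H_{2,j}^{-1}R_j(a)(u_{2,j}+av_js_0)$, $\mu_j:=v_j^*R_j(a)^*K_{1,j}^{-1}R_j(a)v_j$; $\mathbf l_0:=\lambda_0$, $\mathbf l_j:=\lambda_j-\lambda_{j-1}$ ($1\le j\le n-1$); $\mathbf m_0:=\mu_0=(bs_0-s_1)^{-1}$, $\mathbf m_j:=\mu_j-\mu_{j-1}$ ($1\le j\le n$). These matrices are positive definite, in particular invertible. *)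

(* Defs.v *)
(* Complex matrices are modelled over an arbitrary
   numClosedFieldType C (e.g. algC); conjugation is Num.conj. *)
From HB Require Import structures.
From mathcomp Require Import all_boot all_order all_algebra.
Set Implicit Arguments. Unset Strict Implicit. Unset Printing Implicit Defensive.
Import Order.TTheory GRing.Theory Num.Theory.
Local Open Scope ring_scope.

Section DSM.
Variable C : numClosedFieldType.

Definition adjmx m k (M : 'M[C]_(m, k)) : 'M[C]_(k, m) := (map_mx Num.conj M)^T.


Definition posdef m (M : 'M[C]_m) : Prop :=
  forall x : 'cV[C]_m, x != 0 -> 0 < (adjmx x *m M *m x) 0 0.

Variables (q : nat) (a b : C) (s : nat -> 'M[C]_q).

Definition bsz (j : nat) : nat := (\sum_(l < j.+1) q)%N.

Lemma bszS j : (bsz j + q)%N = bsz j.+1.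
Proof. by rewrite /bsz [in RHS]big_ord_recr. Qed.

Definition hankel (f : nat -> 'M[C]_q) (j : nat) : 'M[C]_(bsz j) :=
  @mxblock C _ _ (fun _ : 'I_j.+1 => q) (fun _ : 'I_j.+1 => q)
    (fun l k => f (l + k)%N).

Definition bcol (j : nat) (f : nat -> 'M[C]_q) : 'M[C]_(bsz j, q) :=
  @mxcol C _ (fun _ : 'I_j.+1 => q) q (fun l => f (val l)).

Definition shat (j : nat) : 'M[C]_q :=
  (- (a * b)) *: s j + (a + b) *: s j.+1 - s j.+2.

Definition H1 := hankel s.
Definition H2 := hankel shat.
Definition K1 := hankel (fun i => b *: s i - s i.+1).
Definition K2 := hankel (fun i => - a *: s i + s i.+1).

Definition Tmx (j : nat) : 'M[C]_(bsz j) :=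
  @mxblock C _ _ (fun _ : 'I_j.+1 => q) (fun _ : 'I_j.+1 => q)
    (fun l k => if val l == (val k).+1 then 1%:M else 0).

Definition Rmx (j : nat) (z : C) : 'M[C]_(bsz j) :=
  invmx (1%:M - z *: Tmx j).

Definition vv (j : nat) : 'M[C]_(bsz j, q) :=
  bcol j (fun l => if l == 0%N then 1%:M else 0).

Definition u20 : 'M[C]_q := - (a + b) *: s 0 + s 1.

Definition u2 (j : nat) : 'M[C]_(bsz j, q) :=
  bcol j (fun l => if l == 0%N then u20 else - shat l.-1).

Definition ut1 (j : nat) : 'M[C]_(bsz j, q) :=
  bcol j (fun l => if l == 0%N then s 0 else s l - b *: s l.-1).

Definition Y2 (j' : nat) : 'M[C]_(bsz j', q) := bcol j' (fun l => shat (j'.+1 + l)).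
Definition Yt1 (j' : nat) : 'M[C]_(bsz j', q) :=
  bcol j' (fun l => b *: s (j'.+1 + l) - s (j'.+2 + l)).

Definition brow (j' : nat) (Y : 'M[C]_(bsz j', q)) (H : 'M[C]_(bsz j')) :
  'M[C]_(q, bsz j'.+1) :=
  castmx (erefl q, bszS j') (row_mx (- (adjmx Y *m invmx H)) 1%:M).

Definition P2 (j : nat) (z : C) : 'M[C]_q :=
  match j with
  | 0 => 1%:M
  | j'.+1 => brow (Y2 j') (H2 j') *m Rmx j'.+1 z *m vv j'.+1
  end.

Definition Q2 (j : nat) (z : C) : 'M[C]_q :=
  match j with
  | 0 => - (u20 + z *: s 0)
  | j'.+1 => - (brow (Y2 j') (H2 j') *m Rmx j'.+1 z
                 *m (u2 j'.+1 + z *: (vv j'.+1 *m s 0)))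
  end.

Definition Gamma1 (j : nat) (z : C) : 'M[C]_q :=
  match j with
  | 0 => 1%:M
  | j'.+1 => brow (Yt1 j') (K1 j') *m Rmx j'.+1 z *m vv j'.+1
  end.

Definition Theta1 (j : nat) (z : C) : 'M[C]_q :=
  match j with
  | 0 => s 0
  | j'.+1 => brow (Yt1 j') (K1 j') *m Rmx j'.+1 z *m ut1 j'.+1
  end.

Definition lambda (j : nat) : 'M[C]_q :=
  let w := u2 j + a *: (vv j *m s 0) in
  adjmx w *m adjmx (Rmx j a) *m invmx (H2 j) *m Rmx j a *m w.

Definition mu (j : nat) : 'M[C]_q :=
  adjmx (vv j) *m adjmx (Rmx j a) *m invmx (K1 j) *m Rmx j a *m vv j.

Definition lDSM (j : nat) : 'M[C]_q :=
  match j with 0 => lambda 0 | j'.+1 => lambda j'.+1 - lambda j' end.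

Definition mDSM (j : nat) : 'M[C]_q :=
  match j with 0 => mu 0 | j'.+1 => mu j'.+1 - mu j' end.

Fixpoint prodML (j : nat) : 'M[C]_q :=
  match j with
  | 0 => 1%:M
  | j'.+1 => prodML j' *m (invmx (mDSM j') *m invmx (lDSM j'))
  end.

End DSM.

Arguments posdef {C m} M.
Arguments adjmx {C m k} M.

(* Main.v *)
Require Import Defs.
From HB Require Import structures.
From mathcomp Require Import all_boot all_order all_algebra.
From mathcomp Require Import ring zify.
Import Order.TTheory GRing.Theory Num.Theory.
Local Open Scope ring_scope.
Set Implicit Arguments. Unset Strict Implicit. Unset Printing Implicit Defensive.

Section Blocks.
Variable C : numClosedFieldType.
Variable q : nat.

Definition sz N := (\sum_(l < N) q)%N.
Lemma szE N : sz N = (N * q)%N.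
Proof. by rewrite /sz sum_nat_const card_ord. Qed.
Lemma szS N : (sz N + q)%N = sz N.+1.
Proof. by rewrite /sz [in RHS]big_ord_recr. Qed.

Lemma sigq N (k : 'I_(\sum_(i < N) q)) :
  (@tagnat.sig1 N (fun _ => q) k : nat) = (k %/ q)%N /\
  (@tagnat.sig2 N (fun _ => q) k : nat) = (k %% q)%N.
Proof.
have e := @tagnat.rect N (fun _ => q) k.
have lt2 : (tagnat.sig2 k < q)%N := ltn_ord _.
have l1 : (tagnat.sig1 k <= N)%N by apply: ltnW; exact: ltn_ord.
have hs : (\sum_(i < N | (i < tagnat.sig1 k)%N) q = tagnat.sig1 k * q)%N.
  rewrite -(big_ord_widen_cond _ (fun=> true)) //=.
  by rewrite sum_nat_const card_ord.
rewrite hs in e.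
have q0 : (0 < q)%N by apply: leq_ltn_trans lt2.
move: e lt2; set x := tagnat.sig1 k; set y := tagnat.sig2 k => e lt2.
by rewrite e divnMDl // divn_small // addn0 modnMDl modn_small.
Qed.

Implicit Types (f g : nat -> 'M[C]_q).

Definition cl N f : 'M[C]_(sz N, q) := @mxcol C N (fun _ => q) q (fun l => f (val l)).
Definition rw N f : 'M[C]_(q, sz N) := @mxrow C N (fun _ => q) q (fun l => f (val l)).
Definition hk f N : 'M[C]_(sz N) :=
  @mxblock C N N (fun _ => q) (fun _ => q) (fun l k => f (l + k)%N).

Lemma rw_entry N f i (k : 'I_(sz N)) (j : 'I_N) (l : 'I_q) :
  val j = (k %/ q)%N -> val l = (k %% q)%N -> rw N f i k = f j i l.
Proof.
move=> ej el; rewrite /rw mxE; have [h1 h2] := sigq k.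
have -> : tagnat.sig1 k = j by apply/val_inj; rewrite /= h1.
by congr (f _ i _); apply/val_inj; rewrite /= h2.
Qed.

Lemma cl_entry N f (k : 'I_(sz N)) i (j : 'I_N) (l : 'I_q) :
  val j = (k %/ q)%N -> val l = (k %% q)%N -> cl N f k i = f j l i.
Proof.
move=> ej el; rewrite /cl mxE; have [h1 h2] := sigq k.
have -> : tagnat.sig1 k = j by apply/val_inj; rewrite /= h1.
by congr (f _ _ i); apply/val_inj; rewrite /= h2.
Qed.

Lemma hk_entry N f (k k' : 'I_(sz N)) (j j' : 'I_N) (l l' : 'I_q) :
  val j = (k %/ q)%N -> val l = (k %% q)%N ->
  val j' = (k' %/ q)%N -> val l' = (k' %% q)%N -> hk f N k k' = f (j + j')%N l l'.
Proof.
move=> ej el ej' el'; rewrite /hk mxE; have [h1 h2] := sigq k; have [h1' h2'] := sigq k'.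
have -> : tagnat.sig1 k = j by apply/val_inj; rewrite /= h1.
have -> : tagnat.sig1 k' = j' by apply/val_inj; rewrite /= h1'.
by congr (f _ _ _); apply/val_inj; rewrite /= ?h2 ?h2'.
Qed.



Lemma q_gt0 N (k : 'I_(sz N)) : (0 < q)%N.
Proof. rewrite lt0n; apply/eqP => q0; have : (nat_of_ord k < sz N)%N := ltn_ord k; move: (nat_of_ord k) => x; by rewrite szE q0 muln0. Qed.
Lemma divq_lt N (k : 'I_(sz N)) : (k %/ q < N)%N.
Proof. have q0 := q_gt0 k; have : (nat_of_ord k < sz N)%N := ltn_ord k; move: (nat_of_ord k) => x; by rewrite ltn_divLR // -szE. Qed.
Lemma modq_lt N (k : 'I_(sz N)) : (k %% q < q)%N.
Proof. by rewrite ltn_pmod // (q_gt0 k). Qed.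
Definition ordm N (k : 'I_(sz N)) : 'I_q := Ordinal (modq_lt k).

Lemma cl_ent N f (k : 'I_(sz N)) i : cl N f k i = f (k %/ q)%N (ordm k) i.
Proof. by rewrite (@cl_entry _ _ _ _ (Ordinal (divq_lt k)) (ordm k)). Qed.
Lemma rw_ent N f i (k : 'I_(sz N)) : rw N f i k = f (k %/ q)%N i (ordm k).
Proof. by rewrite (@rw_entry _ _ _ _ (Ordinal (divq_lt k)) (ordm k)). Qed.
Lemma hk_ent N f (k k' : 'I_(sz N)) :
  hk f N k k' = f (k %/ q + k' %/ q)%N (ordm k) (ordm k').
Proof.
by rewrite (@hk_entry _ _ _ _ (Ordinal (divq_lt k)) (Ordinal (divq_lt k')) (ordm k) (ordm k')).
Qed.


Lemma ordm_eq N M (k : 'I_(sz N)) (k' : 'I_(sz M)) :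
  (k : nat) = k' -> ordm k = ordm k'.
Proof. by move=> e; apply/val_inj; rewrite /= e. Qed.

Lemma cl_rec N f : cl N.+1 f = castmx (szS N, erefl) (col_mx (cl N f) (f N)).
Proof.
apply/matrixP => k i; rewrite castmxE cl_ent [in RHS]mxE /= cast_ord_id.
have q0 := q_gt0 k.
case: splitP => k' /= ek.
  by rewrite cl_ent (ordm_eq (k' := k')) // ek.
have e1 : (k %/ q)%N = N by rewrite ek szE divnMDl // divn_small // addn0.
have e2 : ordm k = k'.
  by apply/val_inj; rewrite /= ek szE modnMDl modn_small.
by rewrite e1 e2.
Qed.

Lemma rw_rec N f : rw N.+1 f = castmx (erefl, szS N) (row_mx (rw N f) (f N)).
Proof.
apply/matrixP => i k; rewrite castmxE rw_ent [in RHS]mxE /= cast_ord_id.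
have q0 := q_gt0 k.
case: splitP => k' /= ek.
  by rewrite rw_ent (ordm_eq (k' := k')) // ek.
have e1 : (k %/ q)%N = N by rewrite ek szE divnMDl // divn_small // addn0.
have e2 : ordm k = k'.
  by apply/val_inj; rewrite /= ek szE modnMDl modn_small.
by rewrite e1 e2.
Qed.

Lemma hk_rec f N : hk f N.+1 = castmx (szS N, szS N)
  (block_mx (hk f N) (cl N (fun l => f (N + l)%N)) (rw N (fun l => f (N + l)%N)) (f (N + N)%N)).
Proof.
apply/matrixP => k k'; rewrite castmxE hk_ent [in RHS]mxE /=.
have q0 := q_gt0 k.
case: splitP => kk /= ek; rewrite mxE; case: splitP => kk' /= ek'.
- by rewrite hk_ent (ordm_eq (k' := kk)) // (ordm_eq (k := k') (k' := kk')) // ek ek'.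
- have e1 : (k' %/ q)%N = N by rewrite ek' szE divnMDl // divn_small // addn0.
  have e2 : ordm k' = kk' by apply/val_inj; rewrite /= ek' szE modnMDl modn_small.
  by rewrite cl_ent e1 e2 addnC (ordm_eq (k' := kk)) // ek.
- have e1 : (k %/ q)%N = N by rewrite ek szE divnMDl // divn_small // addn0.
  have e2 : ordm k = kk by apply/val_inj; rewrite /= ek szE modnMDl modn_small.
  by rewrite rw_ent e1 e2 (ordm_eq (k := k') (k' := kk')) // ek'.
- have e1 : (k %/ q)%N = N by rewrite ek szE divnMDl // divn_small // addn0.
  have e2 : ordm k = kk by apply/val_inj; rewrite /= ek szE modnMDl modn_small.
  have e1' : (k' %/ q)%N = N by rewrite ek' szE divnMDl // divn_small // addn0.
  have e2' : ordm k' = kk' by apply/val_inj; rewrite /= ek' szE modnMDl modn_small.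
  by rewrite e1 e2 e1' e2'.
Qed.

Lemma mul_rw_cl N f g : rw N f *m cl N g = \sum_(l < N) f l *m g l.
Proof. by rewrite /rw /cl mul_mxrow_mxcol. Qed.

Lemma mul_rw_hk N f h :
  rw N f *m hk h N = rw N (fun k => \sum_(l < N) f l *m h (l + k)%N).
Proof. by rewrite /rw /hk mul_mxrow_mxblock. Qed.

Lemma mul_hk_cl N h g :
  hk h N *m cl N g = cl N (fun l => \sum_(k < N) h (l + k)%N *m g k).
Proof. by rewrite /cl /hk mul_mxblock_mxrow. Qed.

Lemma mul_cl_r N f (M : 'M[C]_q) : cl N f *m M = cl N (fun l => f l *m M).
Proof. by rewrite /cl mxcol_mul. Qed.

Lemma mul_l_rw N f (M : 'M[C]_q) : M *m rw N f = rw N (fun l => M *m f l).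
Proof. by rewrite /rw mul_mxrow. Qed.

Lemma rw_inj N f g : rw N f = rw N g -> forall k, (k < N)%N -> f k = g k.
Proof.
move=> e k kN; have := congr1 (fun X => @submxrow C N (fun _ => q) q X (Ordinal kN)) e.
by rewrite /rw !mxrowK.
Qed.

Lemma cl_inj N f g : cl N f = cl N g -> forall k, (k < N)%N -> f k = g k.
Proof.
move=> e k kN; have := congr1 (fun X => @submxcol C N (fun _ => q) q X (Ordinal kN)) e.
by rewrite /cl !mxcolK.
Qed.

Definition blkr N (X : 'M[C]_(q, sz N)) (l : nat) : 'M[C]_q :=
  if insub l is Some j then @submxrow C N (fun _ => q) q X j else 0.

Lemma rw_blkr N (X : 'M[C]_(q, sz N)) : rw N (blkr X) = X.
Proof.
rewrite /rw; apply/mxrowP => j; rewrite mxrowK /blkr.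
by rewrite valK.
Qed.

Lemma eq_rw N f g : (forall k, (k < N)%N -> f k = g k) -> rw N f = rw N g.
Proof. by move=> h; rewrite /rw; apply/mxrowP => j; rewrite !mxrowK h ?ltn_ord. Qed.
Lemma eq_cl N f g : (forall k, (k < N)%N -> f k = g k) -> cl N f = cl N g.
Proof. by move=> h; rewrite /cl; apply/mxcolP => j; rewrite !mxcolK h ?ltn_ord. Qed.

Lemma rwD N f g : rw N (fun l => f l + g l) = rw N f + rw N g.
Proof. by rewrite /rw mxrowD. Qed.
Lemma rwN N f : rw N (fun l => - f l) = - rw N f.
Proof. by rewrite /rw mxrowN. Qed.
Lemma rw0 N : rw N (fun _ => 0) = 0.
Proof. by rewrite /rw mxrow0. Qed.
Lemma clD N f g : cl N (fun l => f l + g l) = cl N f + cl N g.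
Proof. by rewrite /cl mxcolD. Qed.
Lemma clN N f : cl N (fun l => - f l) = - cl N f.
Proof. by rewrite /cl mxcolN. Qed.
Lemma cl0 N : cl N (fun _ => 0) = 0.
Proof. by rewrite /cl mxcol0. Qed.

Lemma adjE m k (M : 'M[C]_(m, k)) i j : adjmx M i j = Num.conj (M j i).
Proof. by rewrite /adjmx !mxE. Qed.

Lemma adj_cl N f : adjmx (cl N f) = rw N (fun l => adjmx (f l)).
Proof. by apply/matrixP => i k; rewrite adjE cl_ent rw_ent adjE. Qed.
Lemma adj_rw N f : adjmx (rw N f) = cl N (fun l => adjmx (f l)).
Proof. by apply/matrixP => i k; rewrite adjE cl_ent rw_ent adjE. Qed.

Lemma sz0 : sz 0 = 0%N.
Proof. by rewrite szE. Qed.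
Lemma thin0 m (X : 'M[C]_(m, sz 0)) : X = 0.
Proof. by apply/matrixP => i [x hx]; exfalso; move: hx; rewrite sz0. Qed.
Lemma flat0 m (X : 'M[C]_(sz 0, m)) : X = 0.
Proof. by apply/matrixP => [[x hx]] j; exfalso; move: hx; rewrite sz0. Qed.
End Blocks.

Section Adj.
Variable C : numClosedFieldType.
Implicit Types m n p k : nat.

Lemma adjmxM m n p (A : 'M[C]_(m, n)) (B : 'M[C]_(n, p)) :
  adjmx (A *m B) = adjmx B *m adjmx A.
Proof. by rewrite /adjmx map_mxM trmx_mul. Qed.
Lemma adjmxD m n (A B : 'M[C]_(m, n)) : adjmx (A + B) = adjmx A + adjmx B.
Proof. by rewrite /adjmx map_mxD linearD. Qed.
Lemma adjmxN m n (A : 'M[C]_(m, n)) : adjmx (- A) = - adjmx A.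
Proof. by rewrite /adjmx map_mxN linearN. Qed.
Lemma adjmxB m n (A B : 'M[C]_(m, n)) : adjmx (A - B) = adjmx A - adjmx B.
Proof. by rewrite adjmxD adjmxN. Qed.
Lemma adjmx0 m n : adjmx (0 : 'M[C]_(m, n)) = 0.
Proof. by apply/matrixP => i j; rewrite !mxE rmorph0. Qed.
Lemma adjmxK m n (A : 'M[C]_(m, n)) : adjmx (adjmx A) = A.
Proof. by apply/matrixP => i j; rewrite !mxE conjCK. Qed.
Lemma adjmx1 n : adjmx (1%:M : 'M[C]_n) = 1%:M.
Proof. by rewrite /adjmx map_mx1 trmx1. Qed.
Lemma adjmxZ m n c (A : 'M[C]_(m, n)) : adjmx (c *: A) = Num.conj c *: adjmx A.
Proof. by apply/matrixP => i j; rewrite !mxE rmorphM. Qed.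
Lemma adjmx_sum m n (I : finType) (F : I -> 'M[C]_(m, n)) :
  adjmx (\sum_i F i) = \sum_i adjmx (F i).
Proof.
apply/matrixP => i j; rewrite adjE !summxE rmorph_sum; apply: eq_bigr => l _.
by rewrite adjE.
Qed.
Lemma adjmx_inv n (A : 'M[C]_n) : adjmx (invmx A) = invmx (adjmx A).
Proof. by rewrite /adjmx map_invmx trmx_inv. Qed.
Lemma adjmx_unit n (A : 'M[C]_n) : (adjmx A \in unitmx) = (A \in unitmx).
Proof. by rewrite /adjmx unitmx_tr map_unitmx. Qed.
Lemma adj_col_mx m1 m2 n (A : 'M[C]_(m1, n)) (B : 'M[C]_(m2, n)) :
  adjmx (col_mx A B) = row_mx (adjmx A) (adjmx B).
Proof. by rewrite /adjmx map_col_mx tr_col_mx. Qed.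
Lemma adj_row_mx m n1 n2 (A : 'M[C]_(m, n1)) (B : 'M[C]_(m, n2)) :
  adjmx (row_mx A B) = col_mx (adjmx A) (adjmx B).
Proof. by rewrite /adjmx map_row_mx tr_row_mx. Qed.
Lemma adj_cast m n m' n' (e : (m = m') * (n = n')) (A : 'M[C]_(m, n)) :
  adjmx (castmx e A) = castmx (e.2, e.1) (adjmx A).
Proof. by case: e => e1 e2; case: m' / e1; case: n' / e2; rewrite !castmx_id. Qed.

Lemma conj_real (c : C) : c \is Num.real -> Num.conj c = c.
Proof. exact: conj_Creal. Qed.

End Adj.

Section Schur.
Variable C : numClosedFieldType.

Lemma zm1 (V : zmodType) (P Q R : V) : P - Q + R - P = R - Q.
Proof. by rewrite addrC !addrA addNr add0r addrC. Qed.
Lemma zm2 (V : zmodType) (P Q R : V) : P - Q + R = P + (R - Q).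
Proof. by rewrite -addrA (addrC (- Q)). Qed.

Lemma mul_cast_rc n m p r (e : n = m) (X : 'M[C]_(p,n)) (Y : 'M[C]_(n,r)) :
  castmx (erefl, e) X *m castmx (e, erefl) Y = X *m Y.
Proof. by case: m / e; rewrite !castmx_id. Qed.
Lemma mul_cast_sc n m r (e : n = m) (X : 'M[C]_n) (Y : 'M[C]_(n,r)) :
  castmx (e, e) X *m castmx (e, erefl) Y = castmx (e, erefl) (X *m Y).
Proof. by case: m / e; rewrite !castmx_id. Qed.
Lemma mul_cast_rs n m r (e : n = m) (X : 'M[C]_(r, n)) (Y : 'M[C]_n) :
  castmx (erefl, e) X *m castmx (e, e) Y = castmx (erefl, e) (X *m Y).
Proof. by case: m / e; rewrite !castmx_id. Qed.
Lemma invmx_cast n m (e : n = m) (X : 'M[C]_n) :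
  invmx (castmx (e, e) X) = castmx (e, e) (invmx X).
Proof. by case: m / e; rewrite !castmx_id. Qed.
Lemma unitmx_cast n m (e : n = m) (X : 'M[C]_n) :
  (castmx (e, e) X \in unitmx) = (X \in unitmx).
Proof. by case: m / e; rewrite !castmx_id. Qed.

Lemma schur_unit n k (A : 'M[C]_n) (B : 'M[C]_(n, k)) (c : 'M[C]_k) :
  A \in unitmx -> block_mx A B (adjmx B) c \in unitmx ->
  c - adjmx B *m invmx A *m B \in unitmx.
Proof.
move=> uA uM.
set S := c - _.
have eM : block_mx A B (adjmx B) c =
   block_mx 1%:M 0 (adjmx B *m invmx A) 1%:M *m block_mx A B 0 S.
  rewrite mulmx_block !mul1mx !mul0mx !addr0 ?add0r -mulmxA mulVmx // mulmx1.
  by rewrite /S addrC subrK.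
move: uM; rewrite eM !unitmxE det_mulmx det_lblock det_ublock !det1 !mul1r.
by rewrite unitrM => /andP [].
Qed.

Lemma schur n k r (A : 'M[C]_n) (B : 'M[C]_(n, k)) (c : 'M[C]_k) (x1 : 'M[C]_(n, r)) (x2 : 'M[C]_(k, r)) :
  adjmx A = A -> A \in unitmx -> block_mx A B (adjmx B) c \in unitmx ->
  adjmx (col_mx x1 x2) *m invmx (block_mx A B (adjmx B) c) *m col_mx x1 x2 =
  adjmx x1 *m invmx A *m x1 +
  adjmx (x2 - adjmx B *m invmx A *m x1) *m invmx (c - adjmx B *m invmx A *m B)
    *m (x2 - adjmx B *m invmx A *m x1).
Proof.
move=> hA uA uM.
have uS := schur_unit uA uM.
set M := block_mx _ _ _ _; set S := c - _.
set z := invmx M *m col_mx x1 x2.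
have hz : M *m z = col_mx x1 x2 by rewrite /z mulmxA mulmxV // mul1mx.
rewrite -(vsubmxK z) in hz; rewrite -mulmxA -/z -(vsubmxK z).
set z1 := usubmx z; set z2 := dsubmx z.
move: hz; rewrite /M mul_block_col => /eq_col_mx [h1 h2].
have ez1 : z1 = invmx A *m (x1 - B *m z2).
  by rewrite -h1 addrK mulKmx.
have ez2 : z2 = invmx S *m (x2 - adjmx B *m invmx A *m x1).
  apply: (canRL (mulKmx uS)).
  rewrite -h2 -/z1 -/z2 ez1 /S mulmxBl !mulmxBr !mulmxA.
  by rewrite zm1.
rewrite adj_col_mx mul_row_col ez1 -[X in _ = _ + X]mulmxA -ez2.
rewrite adjmxB !adjmxM adjmx_inv hA adjmxK !mulmxBr !mulmxBl !mulmxA.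
by rewrite zm2.
Qed.

End Schur.

Section Posdef.
Variable C : numClosedFieldType.

Lemma posdef_unit n (M : 'M[C]_n) : posdef M -> M \in unitmx.
Proof.
move=> hM; case: (boolP (M \in unitmx)) => // nu; exfalso.
move: nu; rewrite unitmxE unitfE negbK => /det0P [v nv vM].
have nx : adjmx v != 0.
  by apply: contra nv => /eqP h; rewrite -(adjmxK v) h adjmx0.
have := hM _ nx; rewrite adjmxK vM mul0mx mxE.
by rewrite ltxx.
Qed.

Lemma posdef_sub n k m (e : (n + k = m)%N) (A : 'M[C]_n) B B' c :
  posdef (castmx (e, e) (block_mx A B B' c)) -> posdef A.
Proof.
case: m / e; rewrite castmx_id => h x nx.
have nz : col_mx x (0 : 'M[C]_(k, 1)) != 0.
  apply: contra nx => /eqP; rewrite -col_mx0 => /eq_col_mx [-> _]; exact: eqxx.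
have := h _ nz; rewrite adj_col_mx adjmx0 mul_row_block !mul0mx !addr0 mul_row_col.
by rewrite mulmx0 addr0.
Qed.

Lemma hk_posdef q (f : nat -> 'M[C]_q) M N : posdef (hk f M) -> (N <= M)%N -> posdef (hk f N).
Proof.
elim: M => [|M IH] h; first by rewrite leqn0 => /eqP ->.
rewrite leq_eqVlt => /orP [/eqP -> //|]; rewrite ltnS; apply: IH.
by move: h; rewrite hk_rec => /posdef_sub.
Qed.

End Posdef.

Section RA.
Variable C : numClosedFieldType.
Variable q : nat.
Variable a : C.
Implicit Types (g : nat -> 'M[C]_q).

Lemma sum_delta (V : zmodType) N (F : nat -> V) l : (l < N)%N ->
  \sum_(j < N) (if l == j then F j else 0) = F l.
Proof.
move=> lN; rewrite (bigD1 (Ordinal lN)) //= eqxx big1 ?addr0 // => j nj.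
case: eqP => // e; case/eqP: nj; exact/val_inj.
Qed.

Lemma sum_deltaS (V : zmodType) N (F : nat -> V) l : (l < N)%N ->
  \sum_(j < N) (if l == j.+1 then F j else 0) = if l is l'.+1 then F l' else 0.
Proof.
case: l => [|l] lN; first by rewrite big1.
have lN' : (l < N)%N by apply: ltnW.
rewrite (bigD1 (Ordinal lN')) //= eqxx big1 ?addr0 // => j nj.
case: eqP => // -[e]; case/eqP: nj; exact/val_inj.
Qed.

Definition Tn N : 'M[C]_(sz q N) := @mxblock C N N (fun _ => q) (fun _ => q)
  (fun l k => if val l == (val k).+1 then 1%:M else 0).
Definition Ma N : 'M[C]_(sz q N) := @mxblock C N N (fun _ => q) (fun _ => q)
  (fun l k => if (val k <= val l)%N then a ^+ (l - k) *: 1%:M else 0).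

Lemma one_blk N : (1%:M : 'M[C]_(sz q N)) =
  @mxblock C N N (fun _ => q) (fun _ => q) (fun l k => if l == k then 1%:M else 0).
Proof.
rewrite /sz -(@mxdiagZ C N (fun _ => q) 1) /mxdiag.
by apply/eq_mxblockP => i j; rewrite conform_mx_id.
Qed.

Lemma scale_blk N (c : C) (B : 'I_N -> 'I_N -> 'M[C]_q) :
  c *: @mxblock C N N (fun _ => q) (fun _ => q) B =
  @mxblock C N N (fun _ => q) (fun _ => q) (fun l k => c *: B l k).
Proof. by apply/matrixP => i j; rewrite !mxE. Qed.

Lemma Ma_inv N : (1%:M - a *: Tn N) *m Ma N = 1%:M.
Proof.
rewrite {1}one_blk /Tn scale_blk -mxblockB mul_mxblock [RHS]one_blk.
apply/eq_mxblockP => l k.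
set M := fun x : nat => if (\val k <= x)%N then a ^+ (x - k) *: (1%:M : 'M[C]_q) else 0.
rewrite (eq_bigr (fun j : 'I_N => (if val l == val j then M j else 0) -
   (if val l == (val j).+1 then a *: M j else 0))); last first.
  move=> j _; rewrite mulmxBl val_eqE.
  by case E1: (l == j); case E2: (val l == (val j).+1); rewrite ?mul1mx ?mul0mx ?scaler0 ?mul0mx // -scalemxAl mul1mx.
rewrite sumrB (sum_delta (fun j => M j) (ltn_ord l)) (sum_deltaS (fun j => a *: M j) (ltn_ord l)).
rewrite -val_eqE /M /=; move: (nat_of_ord l) (nat_of_ord k) => {M} l0 k0; clear l k; move: l0 k0 => l k.
case: l => [|l].
  rewrite subr0; case: k => [|k] //=; by rewrite expr0 scale1r.
case: (ltngtP k l.+1) => hk.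
- rewrite ltnS in hk; rewrite hk scalerA -exprS subSn // subrr //.
- by rewrite (leqNgt k l) (ltn_trans (ltnSn l) hk) /= scaler0 subrr.
- by rewrite hk subnn expr0 scale1r ltnn /= scaler0 subr0.
Qed.

Lemma inv_right n (X Y : 'M[C]_n) : X *m Y = 1%:M -> invmx X = Y.
Proof.
move=> h; have [u _] := mulmx1_unit h.
by rewrite -[LHS]mulmx1 -h mulmxA mulVmx // mul1mx.
Qed.

Lemma Rmx_eq j : Rmx q j a = Ma j.+1.
Proof. apply: inv_right; exact: Ma_inv. Qed.

Definition ps (g : nat -> 'M[C]_q) l := \sum_(k < l.+1) a ^+ (l - k) *: g k.

Lemma psS g l : ps g l.+1 = a *: ps g l + g l.+1.
Proof.
rewrite /ps big_ord_recr /= subnn expr0 scale1r; congr (_ + _).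
rewrite scaler_sumr; apply: eq_bigr => k _; rewrite scalerA -exprS subSn //.
by rewrite -ltnS ltn_ord.
Qed.

Lemma ps0 g : ps g 0 = g 0%N.
Proof. by rewrite /ps big_ord1 subnn expr0 scale1r. Qed.

Lemma Ma_cl N g : Ma N *m cl N g = cl N (ps g).
Proof.
rewrite /Ma /cl mul_mxblock_mxrow; apply/eq_mxcolP => l.
rewrite /ps (big_ord_widen N (fun k : nat => a ^+ (l - k) *: g k)) ?ltn_ord //.
rewrite [RHS]big_mkcond; apply: eq_bigr => k _; rewrite ltnS.
by case: ifP; rewrite ?mul0mx // -scalemxAl mul1mx.
Qed.

Lemma R_cl j g : Rmx q j a *m cl j.+1 g = cl j.+1 (ps g).
Proof. by rewrite Rmx_eq Ma_cl. Qed.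

Lemma clZ N (c : C) g : c *: cl N g = cl N (fun l => c *: g l).
Proof. by apply/matrixP => i k; rewrite mxE !cl_ent mxE. Qed.
Lemma rwZ N (c : C) g : c *: rw N g = rw N (fun l => c *: g l).
Proof. by apply/matrixP => i k; rewrite mxE !rw_ent mxE. Qed.

End RA.

Section DSM2.
Variable C : numClosedFieldType.
Variable q : nat.
Variables (a b : C) (s : nat -> 'M[C]_q).

Definition tt l := b *: s l - s l.+1.

Lemma shat_t m : shat a b s m = tt m.+1 - a *: tt m.
Proof. by apply/matrixP => i k; rewrite /shat /tt !mxE; ring. Qed.

Lemma R_vv j : Rmx q j a *m vv C q j = cl j.+1 (fun l => a ^+ l *: 1%:M).
Proof.
change (vv C q j) with (cl j.+1 (fun l => if l == 0%N then (1%:M : 'M[C]_q) else 0)).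
rewrite R_cl; apply: eq_cl => l _.
elim: l => [|l IH]; first by rewrite ps0 expr0 scale1r.
by rewrite psS IH /= addr0 scalerA -exprS.
Qed.

Lemma R_w j : Rmx q j a *m (u2 a b s j + a *: (vv C q j *m s 0%N)) = - cl j.+1 tt.
Proof.
change (vv C q j) with (cl j.+1 (fun l => if l == 0%N then (1%:M : 'M[C]_q) else 0)).
change (u2 a b s j) with (cl j.+1 (fun l => if l == 0%N then u20 a b s else - shat a b s l.-1)).
rewrite mul_cl_r clZ -clD R_cl -clN; apply: eq_cl => l _.
elim: l => [|l IH].
  by rewrite ps0 /= mul1mx; apply/matrixP => i k; rewrite /u20 /tt !mxE; ring.
rewrite psS IH /= mul0mx scaler0 addr0 shat_t.
by apply/matrixP => i k; rewrite !mxE; ring.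
Qed.

Lemma R_ut1 j : Rmx q j a *m ut1 b s j =
  cl j.+1 (fun l => a ^+ l *: s 0%N - \sum_(i < l) a ^+ (l - i.+1) *: tt i).
Proof.
change (ut1 b s j) with (cl j.+1 (fun l => if l == 0%N then s 0%N else s l - b *: s l.-1)).
rewrite R_cl; apply: eq_cl => l _.
elim: l => [|l IH]; first by rewrite ps0 /= big_ord0 expr0 scale1r subr0.
rewrite psS IH /= big_ord_recr /= subnn expr0 scale1r scalerBr scalerA -exprS.
rewrite scaler_sumr (eq_bigr (fun i : 'I_l => a ^+ (l.+1 - i.+1) *: tt i)); last first.
  by move=> i _; rewrite scalerA -exprS subSn // ltn_ord.
by apply/matrixP => i k; rewrite /tt !mxE; ring.
Qed.

End DSM2.

Lemma tri_ex (V : zmodType) M (F : nat -> nat -> V) :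
 \sum_(l < M) \sum_(i < l) F l i = \sum_(i < M) \sum_(i.+1 <= l < M) F l i.
Proof.
elim: M => [|M IH]; first by rewrite !big_ord0.
rewrite big_ord_recr IH /= [RHS]big_ord_recr /= big_geq // addr0.
rewrite -big_split /=; apply: eq_bigr => i _.
by rewrite [in RHS]big_nat_recr.
Qed.

Section Sums.
Variable C : numClosedFieldType.
Variable q : nat.
Variable a : C.
Implicit Types (g u X : nat -> 'M[C]_q).

Definition rho g M i := \sum_(i.+1 <= l < M) a ^+ (l - i.+1) *: g l.
Definition dd u m := u m.+1 - a *: u m.

Lemma tele u k l : \sum_(i < l) a ^+ (l - i.+1) *: dd u (i + k) = u (l + k)%N - a ^+ l *: u k.
Proof.
elim: l => [|l IH]; first by rewrite big_ord0 expr0 scale1r subrr.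
rewrite big_ord_recr /= subnn expr0 scale1r.
rewrite (eq_bigr (fun i : 'I_l => a *: (a ^+ (l - i.+1) *: dd u (i + k)))); last first.
  by move=> i _; rewrite scalerA -exprS subSn // ltn_ord.
rewrite -scaler_sumr IH /dd addSn exprS -scalerA.
by rewrite scalerBr addrC addrA subrK.
Qed.

Lemma exchT g X M :
  \sum_(l < M) g l *m (\sum_(i < l) a ^+ (l - i.+1) *: X i) =
  \sum_(i < M) rho g M i *m X i.
Proof.
under eq_bigr => l _ do rewrite mulmx_sumr.
rewrite (tri_ex M (fun l i => g l *m (a ^+ (l - i.+1) *: X i))).
apply: eq_bigr => i _; rewrite /rho mulmx_suml; apply: eq_bigr => l _.
by rewrite -scalemxAr scalemxAl.
Qed.

Lemma taylorL g u M k :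
  \sum_(l < M) g l *m u (l + k)%N - (\sum_(l < M) a ^+ l *: g l) *m u k =
  \sum_(i < M) rho g M i *m dd u (i + k).
Proof.
rewrite -(exchT g (fun i => dd u (i + k))) mulmx_suml -sumrB; apply: eq_bigr => l _.
by rewrite tele mulmxBr -scalemxAr scalemxAl.
Qed.

Lemma exchTR g X M :
  \sum_(l < M) (\sum_(i < l) a ^+ (l - i.+1) *: X i) *m g l =
  \sum_(i < M) X i *m rho g M i.
Proof.
under eq_bigr => l _ do rewrite mulmx_suml.
rewrite (tri_ex M (fun l i => (a ^+ (l - i.+1) *: X i) *m g l)).
apply: eq_bigr => i _; rewrite /rho mulmx_sumr; apply: eq_bigr => l _.
by rewrite -scalemxAl scalemxAr.
Qed.

Lemma taylorR g u M k :
  \sum_(l < M) u (l + k)%N *m g l - u k *m (\sum_(l < M) a ^+ l *: g l) =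
  \sum_(i < M) dd u (i + k) *m rho g M i.
Proof.
rewrite -(exchTR g (fun i => dd u (i + k))) mulmx_sumr -sumrB; apply: eq_bigr => l _.
by rewrite tele mulmxBl -scalemxAl scalemxAr.
Qed.

Lemma rho_last g M : rho g M.+2 M = g M.+1.
Proof. by rewrite /rho big_nat1 subnn expr0 scale1r. Qed.
Lemma rho_geq g M i : (M <= i.+1)%N -> rho g M i = 0.
Proof. by move=> h; rewrite /rho big_geq. Qed.

End Sums.

Section Ortho.
Variable C : numClosedFieldType.
Variable q : nat.
Variable f : nat -> 'M[C]_q.
Implicit Types (g x z : nat -> 'M[C]_q).

Definition Yc N := cl N (fun l => f (N + l)%N).
Definition Xr N : 'M[C]_(q, sz q N) := - (adjmx (Yc N) *m invmx (hk f N)).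
Definition orow N : 'M[C]_(q, sz q N.+1) :=
  castmx (erefl, szS q N) (row_mx (Xr N) 1%:M).
Definition gam N l := if (l < N)%N then blkr (Xr N) l else if l == N then 1%:M else 0.
Definition Sc N := f (N + N)%N - adjmx (Yc N) *m invmx (hk f N) *m Yc N.

Lemma gamN N : gam N N = 1%:M.
Proof. by rewrite /gam ltnn eqxx. Qed.

Lemma orow_rw N : orow N = rw N.+1 (gam N).
Proof.
rewrite rw_rec gamN /orow; congr (castmx _ (row_mx _ _)).
rewrite -[LHS](rw_blkr (Xr N)); apply: eq_rw => k kN.
by rewrite /gam kN.
Qed.


Lemma hk_adj N : (forall k, (k <= N + N)%N -> adjmx (f k) = f k) ->
  adjmx (hk f N) = hk f N.
Proof.
move=> hf; apply/matrixP => k k'; rewrite adjE !hk_ent.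
have h1 := divq_lt k; have h2 := divq_lt k'.
have hm : ((k' %/ q) + (k %/ q) <= N + N)%N by rewrite leq_add // ltnW.
have := hf _ hm => /matrixP /(_ (ordm k) (ordm k')); rewrite adjE => ->.
by rewrite addnC.
Qed.

Lemma Yc_adj N : (forall k, (k <= N + N)%N -> adjmx (f k) = f k) ->
  adjmx (Yc N) = rw N (fun l => f (N + l)%N).
Proof.
move=> hf; rewrite /Yc adj_cl; apply: eq_rw => l lN; apply: hf.
by rewrite leq_add2l ltnW.
Qed.

Lemma orow_hk N : (forall k, (k <= N + N)%N -> adjmx (f k) = f k) ->
  hk f N \in unitmx ->
  orow N *m hk f N.+1 = castmx (erefl, szS q N) (row_mx 0 (Sc N)).
Proof.
move=> hf uA; rewrite /orow hk_rec mul_cast_rs mul_row_block mul1mx -Yc_adj //.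
rewrite -/(Yc N) /Xr mulNmx -mulmxA mulVmx // mulmx1 addNr.
by rewrite /Sc mulNmx mul1mx addrC.
Qed.

Lemma orth N : (forall k, (k <= N + N)%N -> adjmx (f k) = f k) ->
  hk f N \in unitmx ->
  (forall k, (k < N)%N -> \sum_(l < N.+1) gam N l *m f (l + k)%N = 0) /\
  \sum_(l < N.+1) gam N l *m f (l + N)%N = Sc N.
Proof.
move=> hf uA; have h := orow_hk hf uA.
rewrite orow_rw mul_rw_hk in h.
have e : castmx (erefl, szS q N) (row_mx (0 : 'M[C]_(q, sz q N)) (Sc N)) =
  rw N.+1 (fun k => if (k < N)%N then 0 else Sc N).
  by rewrite rw_rec ltnn; congr (castmx _ (row_mx _ _)); rewrite -(rw0 C q N); apply: eq_rw => k ->.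
rewrite e in h; have := rw_inj h => hh; split.
  by move=> k kN; rewrite hh ?kN // ltnS ltnW.
by rewrite hh // ltnn.
Qed.

Lemma orth_uniq N z : (forall k, (k <= N + N)%N -> adjmx (f k) = f k) ->
  hk f N \in unitmx ->
  (forall k, (k < N)%N -> \sum_(l < N.+1) z l *m f (l + k)%N = 0) ->
  forall l, (l < N.+1)%N -> z l = z N *m gam N l.
Proof.
move=> hf uA hz; have [ho _] := orth hf uA.
pose d l := z l - z N *m gam N l.
have dN : d N = 0 by rewrite /d gamN mulmx1 subrr.
have hd : forall k, (k < N)%N -> \sum_(l < N) d l *m f (l + k)%N = 0.
  move=> k kN; have := hz k kN; rewrite big_ord_recr /= -/(d N) => hzk.
  have : \sum_(l < N.+1) d l *m f (l + k)%N = 0.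
    rewrite /d; under eq_bigr do rewrite mulmxBl -mulmxA.
    by rewrite sumrB -mulmx_sumr ho // mulmx0 subr0 hz.
  by rewrite big_ord_recr /= dN mul0mx addr0.
have h0 : rw N d *m hk f N = 0.
  by rewrite mul_rw_hk -(rw0 C q N); apply: eq_rw => k kN; rewrite hd.
have h1 : rw N d = rw N (fun _ => 0).
  by rewrite rw0 -[LHS]mulmx1 -(mulmxV uA) mulmxA h0 mul0mx.
move=> l; rewrite ltnS leq_eqVlt => /orP [/eqP -> | lN].
  by rewrite gamN mulmx1.
by apply/eqP; rewrite -subr_eq0; apply/eqP; have := rw_inj h1 lN.
Qed.

Lemma Sc_adj N : (forall k, (k <= N + N)%N -> adjmx (f k) = f k) ->
  adjmx (Sc N) = Sc N.
Proof.
move=> hf; rewrite /Sc adjmxB !adjmxM adjmx_inv hk_adj // adjmxK hf //.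
by rewrite mulmxA.
Qed.

Lemma orow_cl N x :
  orow N *m cl N.+1 x = x N - adjmx (Yc N) *m invmx (hk f N) *m cl N x.
Proof.
by rewrite /orow cl_rec mul_cast_rc mul_row_col mul1mx /Xr mulNmx addrC.
Qed.

Lemma Sc_unit N : (forall k, (k <= N + N)%N -> adjmx (f k) = f k) ->
  hk f N \in unitmx -> hk f N.+1 \in unitmx -> Sc N \in unitmx.
Proof.
move=> hf uA; rewrite hk_rec unitmx_cast -Yc_adj // => uM.
exact: schur_unit.
Qed.

Lemma quad_rec N x : (forall k, (k <= N + N)%N -> adjmx (f k) = f k) ->
  hk f N \in unitmx -> hk f N.+1 \in unitmx ->
  adjmx (cl N.+1 x) *m invmx (hk f N.+1) *m cl N.+1 x =
  adjmx (cl N x) *m invmx (hk f N) *m cl N x +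
  adjmx (orow N *m cl N.+1 x) *m invmx (Sc N) *m (orow N *m cl N.+1 x).
Proof.
move=> hf uA uM; rewrite orow_cl.
move: uM; rewrite !hk_rec cl_rec -Yc_adj // => uM.
rewrite adj_cast invmx_cast /= mul_cast_rs mul_cast_rc.
rewrite unitmx_cast in uM.
by rewrite schur // hk_adj.
Qed.

End Ortho.

Section Ids.
Variable C : numClosedFieldType.
Variable q : nat.
Variable a : C.
Hypothesis ha : a \is Num.real.
Implicit Types (g u x z gm et : nat -> 'M[C]_q).

Lemma adj_geo g M :
  adjmx (\sum_(l < M) a ^+ l *: g l) = \sum_(l < M) a ^+ l *: adjmx (g l).
Proof.
rewrite adjmx_sum; apply: eq_bigr => l _.
by rewrite adjmxZ conj_real // rpredX.
Qed.

Lemma id1 gm et u N :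
  gm N = 1%:M -> et N = 1%:M ->
  (forall k, (k < N)%N -> \sum_(l < N.+1) gm l *m u (l + k)%N = 0) ->
  (forall k, (k < N)%N -> \sum_(l < N.+1) et l *m dd a u (l + k)%N = 0) ->
  (forall k, (k <= N + N)%N -> adjmx (u k) = u k) ->
  (\sum_(l < N.+1) et l *m u l) *m adjmx (\sum_(l < N.+1) a ^+ l *: gm l) =
  adjmx (\sum_(l < N.+1) gm l *m u (l + N)%N).
Proof.
move=> gN eN og oe hu.
rewrite adj_geo mulmx_suml.
set g' := fun l => adjmx (gm l).
have hadj : forall l, (l <= N)%N ->
    adjmx (\sum_(m < N.+1) gm m *m u (m + l)%N) = \sum_(m < N.+1) u (m + l)%N *m g' m.
  move=> l lN; rewrite adjmx_sum; apply: eq_bigr => m _; rewrite adjmxM hu //.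
  by rewrite leq_add // -ltnS.
have e1 : forall l, (l < N.+1)%N -> et l *m u l *m (\sum_(m < N.+1) a ^+ m *: g' m) =
    et l *m (\sum_(m < N.+1) u (m + l)%N *m g' m) -
    et l *m (\sum_(i < N.+1) dd a u (i + l) *m rho a g' N.+1 i).
  move=> l _; rewrite -mulmxBr -(taylorR a g' u N.+1 l) subKr mulmxA.
  by [].
rewrite (eq_bigr (fun l : 'I_N.+1 => et l *m (\sum_(m < N.+1) u (m + l)%N *m g' m) -
    et l *m (\sum_(i < N.+1) dd a u (i + l) *m rho a g' N.+1 i))); last first.
  by move=> l _; rewrite e1.
rewrite sumrB.
have z2 : \sum_(l < N.+1) et l *m (\sum_(i < N.+1) dd a u (i + l) *m rho a g' N.+1 i) = 0.
  under eq_bigr => l _ do rewrite mulmx_sumr.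
  rewrite exchange_big /= big_ord_recr /= rho_geq //.
  rewrite [X in _ + X]big1 ?addr0 => [|l _]; last by rewrite !mulmx0.
  rewrite big1 // => i _.
  under eq_bigr => l _ do rewrite mulmxA addnC.
  by rewrite -mulmx_suml oe ?mul0mx.
rewrite z2 subr0 big_ord_recr /= eN mul1mx -hadj // big1 ?add0r // => l _.
by rewrite -hadj ?og ?adjmx0 ?mulmx0 // ltnW.
Qed.


Lemma dd_adj u m : adjmx (u m) = u m -> adjmx (u m.+1) = u m.+1 ->
  adjmx (dd a u m) = dd a u m.
Proof. by move=> h1 h2; rewrite /dd adjmxB adjmxZ conj_real // h1 h2. Qed.

Lemma id2 gm et u N :
  gm N.+1 = 1%:M -> et N = 1%:M ->
  (forall k, (k < N.+1)%N -> \sum_(l < N.+2) gm l *m u (l + k)%N = 0) ->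
  (forall k, (k < N)%N -> \sum_(l < N.+1) et l *m dd a u (l + k)%N = 0) ->
  (forall k, (k <= (N + N).+1)%N -> adjmx (u k) = u k) ->
  (\sum_(l < N.+2) a ^+ l *: gm l) *m adjmx (\sum_(k < N.+1) et k *m u k) =
  - adjmx (\sum_(k < N.+1) et k *m dd a u (k + N)%N).
Proof.
move=> gN eN og oe hu.
have hd : forall m, (m <= N + N)%N -> adjmx (dd a u m) = dd a u m.
  by move=> m hm; apply: dd_adj; apply: hu; rewrite ?ltnS // ltnW.
rewrite adjmx_sum mulmx_sumr.
rewrite (eq_bigr (fun k : 'I_N.+1 => - ((\sum_(i < N.+2) rho a gm N.+2 i *m dd a u (i + k))
     *m adjmx (et k)))); last first.
  move=> k _; rewrite adjmxM hu; last by rewrite (leq_trans (ltnW (ltn_ord k))) // ltnS leq_addl.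
  by rewrite mulmxA -(taylorL a gm u N.+2 k) og ?ltn_ord // sub0r mulNmx opprK.
rewrite sumrN; congr (- _).
under eq_bigr => k _ do rewrite mulmx_suml.
rewrite exchange_big /= big_ord_recr /= rho_geq //.
rewrite [X in _ + X]big1 ?addr0 => [|k _]; last by rewrite mul0mx mul0mx.
rewrite big_ord_recr /= rho_last gN.
rewrite big1 ?add0r => [|i _].
  rewrite adjmx_sum; apply: eq_bigr => k _.
  by rewrite mul1mx adjmxM addnC hd // leq_add2r -ltnS ltn_ord.
under eq_bigr => k _ do rewrite -mulmxA.
rewrite -mulmx_sumr.
have -> : \sum_(k < N.+1) dd a u (i + k)%N *m adjmx (et k) =
    adjmx (\sum_(k < N.+1) et k *m dd a u (k + i)%N).
  rewrite adjmx_sum; apply: eq_bigr => k _; rewrite adjmxM addnC hd //.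
  by rewrite leq_add // ?(ltnW (ltn_ord i)) // -ltnS ltn_ord.
by rewrite oe ?adjmx0 ?mulmx0.
Qed.


End Ids.

Section Ids2.
Variable C : numClosedFieldType.
Variable q : nat.
Variable a : C.
Hypothesis ha : a \is Num.real.
Variables (u f : nat -> 'M[C]_q).
Hypothesis hfd : forall m, f m = dd a u m.

Definition EE l : 'M[C]_q := a ^+ l *: 1%:M.

Lemma adj_EE N : adjmx (cl N EE) = rw N EE.
Proof.
by rewrite adj_cl; apply: eq_rw => l _; rewrite /EE adjmxZ adjmx1 conj_real // rpredX.
Qed.

Lemma id3 N :
  (forall k, (k <= N + N)%N -> adjmx (f k) = f k) ->
  hk f N \in unitmx -> hk u N.+1 \in unitmx ->
  orow f N *m cl N.+1 EE =
  (orow f N *m cl N.+1 u) *m (adjmx (cl N.+1 EE) *m invmx (hk u N.+1) *m cl N.+1 EE).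
Proof.
move=> hf uH uK.
set r := adjmx (cl N.+1 EE) *m invmx (hk u N.+1).
set z := blkr r.
have rz : rw N.+1 z = r by rewrite rw_blkr.
have h1 : rw N.+1 z *m hk u N.+1 = rw N.+1 EE by rewrite rz /r -mulmxA mulVmx // mulmx1 adj_EE.
rewrite mul_rw_hk in h1; have h2 := rw_inj h1.
have h3 : forall k, (k < N)%N -> \sum_(l < N.+1) z l *m f (l + k)%N = 0.
  move=> k kN; under eq_bigr => l _ do rewrite hfd /dd mulmxBr -scalemxAr.
  rewrite sumrB -scaler_sumr.
  have -> : \sum_(i < N.+1) z i *m u (i + k).+1 = \sum_(i < N.+1) z i *m u (i + k.+1)%N.
    by apply: eq_bigr => i _; rewrite addnS.
  have hk1 : (k.+1 < N.+1)%N by rewrite ltnS.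
  have hk2 : (k < N.+1)%N by rewrite ltnS ltnW.
  by rewrite (h2 _ hk1) (h2 _ hk2) /EE scalerA -exprS subrr.
have h4 := orth_uniq hf uH h3.
have rz2 : r = z N *m orow f N.
  rewrite -rz orow_rw mul_l_rw; apply: eq_rw => l lN; exact: h4.
have h5 : z N *m (orow f N *m cl N.+1 u) = 1%:M.
  rewrite mulmxA -rz2 -rz mul_rw_cl.
  have := h2 0%N isT; rewrite /EE expr0 scale1r => <-.
  by apply: eq_bigr => l _; rewrite addn0.
have h6 := mulmx1C h5.
by rewrite rz2 -(mulmxA (z N)) mulmxA h6 mul1mx.
Qed.


Lemma geoE N (g : nat -> 'M[C]_q) : \sum_(l < N) g l *m EE l = \sum_(l < N) a ^+ l *: g l.
Proof. by apply: eq_bigr => l _; rewrite /EE -scalemxAr mulmx1. Qed.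

Lemma id4 N (s0 : 'M[C]_q) :
  (forall k, (k <= N + N)%N -> adjmx (u k) = u k) ->
  hk u N \in unitmx -> hk f N \in unitmx ->
  orow u N *m cl N.+1 (fun l => a ^+ l *: s0 - \sum_(i < l) a ^+ (l - i.+1) *: u i) =
  (orow u N *m cl N.+1 EE) *m (s0 + adjmx (cl N u) *m invmx (hk f N) *m cl N u).
Proof.
move=> hu uK uH.
have [og _] := orth hu uK.
rewrite orow_rw !mul_rw_cl geoE.
set g := gam u N.
set G := \sum_(l < N.+1) a ^+ l *: g l.
under eq_bigr => l _ do rewrite mulmxBr.
rewrite sumrB exchT.
have e1 : \sum_(i < N.+1) g i *m (a ^+ i *: s0) = G *m s0.
  by rewrite /G mulmx_suml; apply: eq_bigr => l _; rewrite -scalemxAr scalemxAl.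
rewrite e1 big_ord_recr /= rho_geq // mul0mx addr0.
have hr : rw N (rho a g N.+1) *m hk f N = - (G *m adjmx (cl N u)).
  rewrite mul_rw_hk adj_cl mul_l_rw -rwN; apply: eq_rw => k kN.
  have := taylorL a g u N.+1 k; rewrite og // -/G.
  rewrite big_ord_recr /= rho_geq // mul0mx addr0 => e.
  rewrite hu; last by rewrite (leq_trans (ltnW kN)) // leq_addr.
  under eq_bigr => i _ do rewrite hfd.
  by rewrite -e sub0r.
have hr2 : rw N (rho a g N.+1) = - (G *m adjmx (cl N u)) *m invmx (hk f N).
  by rewrite -hr -mulmxA mulmxV // mulmx1.
rewrite -mul_rw_cl hr2 mulmxDr !mulNmx opprK !mulmxA.
by [].
Qed.

End Ids2.

Section Bridge.
Variable C : numClosedFieldType.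
Variable q : nat.
Variables (a b : C) (s : nat -> 'M[C]_q).

Notation t := (tt b s).
Notation sh := (shat a b s).

Lemma orow0 (f g : nat -> 'M[C]_q) : orow f 0 *m cl 1 g = g 0%N.
Proof. by rewrite orow_cl (flat0 (cl 0 g)) mulmx0 subr0. Qed.

Lemma brow_t j : brow (Yt1 b s j) (K1 b s j) = orow t j.+1.
Proof. by rewrite /brow /orow /Xr; apply: eq_castmx. Qed.
Lemma brow_sh j : brow (Y2 a b s j) (H2 a b s j) = orow sh j.+1.
Proof. by rewrite /brow /orow /Xr; apply: eq_castmx. Qed.

Lemma bG N : Gamma1 b s N a = orow t N *m cl N.+1 (EE q a).
Proof.
case: N => [|j]; first by rewrite orow0 /EE expr0 scale1r.
by rewrite /Gamma1 brow_t -mulmxA R_vv.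
Qed.

Lemma bP N : P2 a b s N a = orow sh N *m cl N.+1 (EE q a).
Proof.
case: N => [|j]; first by rewrite orow0 /EE expr0 scale1r.
by rewrite /P2 brow_sh -mulmxA R_vv.
Qed.

Lemma bQ N : Q2 a b s N a = orow sh N *m cl N.+1 t.
Proof.
case: N => [|j].
  by rewrite orow0 /Q2 /u20 /tt; apply/matrixP => i k; rewrite !mxE; ring.
by rewrite /Q2 brow_sh -mulmxA (R_w a b s) mulmxN opprK.
Qed.

Lemma bT N : Theta1 b s N a =
  orow t N *m cl N.+1 (fun l => a ^+ l *: s 0%N - \sum_(i < l) a ^+ (l - i.+1) *: t i).
Proof.
case: N => [|j]; first by rewrite orow0 big_ord0 expr0 scale1r subr0.
by rewrite /Theta1 brow_t -mulmxA (R_ut1 a b s).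
Qed.

Lemma bmu N : mu a b s N = adjmx (cl N.+1 (EE q a)) *m invmx (hk t N.+1) *m cl N.+1 (EE q a).
Proof.
by rewrite /mu -adjmxM -mulmxA R_vv.
Qed.

Lemma blam N : lambda a b s N = adjmx (cl N.+1 t) *m invmx (hk sh N.+1) *m cl N.+1 t.
Proof.
by rewrite /lambda -adjmxM -mulmxA (R_w a b s) adjmxN !mulNmx mulmxN opprK.
Qed.

End Bridge.

Section Final.
Variable C : numClosedFieldType.
Variables (q n : nat) (a b : C) (s : nat -> 'M[C]_q).
Hypothesis hn : (0 < n)%N.
Hypothesis ha : a \is Num.real.
Hypothesis hb : b \is Num.real.
Hypothesis hS : forall k, (k <= 2 * n + 1)%N -> adjmx (s k) = s k.
Notation t := (tt b s).
Notation sh := (shat a b s).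
Hypothesis pK : posdef (hk t n.+1).
Hypothesis pH : posdef (hk sh n).

Lemma hdd m : sh m = dd a t m.
Proof. exact: shat_t. Qed.

Lemma ht k : (k <= n + n)%N -> adjmx (t k) = t k.
Proof.
move=> hk; rewrite /tt adjmxB adjmxZ conj_real // !hS //; lia.
Qed.

Lemma hsh k : (k.+1 <= n + n)%N -> adjmx (sh k) = sh k.
Proof.
move=> hk; rewrite hdd; apply: dd_adj => //; apply: ht => //; exact: ltnW.
Qed.

Lemma uK N : (N <= n.+1)%N -> hk t N \in unitmx.
Proof. by move=> h; apply: posdef_unit; apply: hk_posdef pK h. Qed.
Lemma uH N : (N <= n)%N -> hk sh N \in unitmx.
Proof. by move=> h; apply: posdef_unit; apply: hk_posdef pH h. Qed.

Definition GG N := orow t N *m cl N.+1 (EE q a).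
Definition QQ N := orow sh N *m cl N.+1 t.

Lemma mD N : (N <= n)%N -> mDSM a b s N = adjmx (GG N) *m invmx (Sc t N) *m GG N.
Proof.
move=> hN.
have hf : forall k, (k <= N + N)%N -> adjmx (t k) = t k.
  by move=> k hk; apply: ht; rewrite (leq_trans hk) // leq_add.
have := quad_rec (EE q a) hf (uK (leq_trans hN (leqnSn _))) (uK (hN : (N.+1 <= n.+1)%N)).
rewrite -bmu /GG => e.
case: N hN hf e => [|N] hN hf e.
  by rewrite /mDSM e (thin0 (adjmx (cl 0 (EE q a)))) !mul0mx add0r.
by rewrite /mDSM e -bmu addrC addKr.
Qed.

Lemma lD N : (N < n)%N -> lDSM a b s N = adjmx (QQ N) *m invmx (Sc sh N) *m QQ N.
Proof.
move=> hN.
have hf : forall k, (k <= N + N)%N -> adjmx (sh k) = sh k.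
  move=> k hk; apply: hsh; rewrite (leq_trans _ (leq_add hN hN)) //.
  by rewrite addSn ltnS (leq_trans hk) // leq_add2l leqnSn.
have := quad_rec t hf (uH (ltnW hN)) (uH hN).
rewrite -blam /QQ => e.
case: N hN hf e => [|N] hN hf e.
  by rewrite /lDSM e (thin0 (adjmx (cl 0 t))) !mul0mx add0r.
by rewrite /lDSM e -blam addrC addKr.
Qed.


Lemma GG_sum N : GG N = \sum_(l < N.+1) a ^+ l *: gam t N l.
Proof. by rewrite /GG orow_rw mul_rw_cl geoE. Qed.
Lemma QQ_sum N : QQ N = \sum_(l < N.+1) gam sh N l *m t l.
Proof. by rewrite /QQ orow_rw mul_rw_cl. Qed.

Lemma htN N : (N <= n)%N -> forall k, (k <= N + N)%N -> adjmx (t k) = t k.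
Proof. by move=> hN k hk; apply: ht; lia. Qed.
Lemma hshN N : (N < n)%N -> forall k, (k <= N + N)%N -> adjmx (sh k) = sh k.
Proof. by move=> hN k hk; apply: hsh; lia. Qed.

Lemma oeN N : (N < n)%N ->
  forall k, (k < N)%N -> \sum_(l < N.+1) gam sh N l *m dd a t (l + k)%N = 0.
Proof.
move=> hN k kN; have [o _] := orth (hshN hN) (uH (ltnW hN)).
rewrite (eq_bigr (fun l : 'I_N.+1 => gam sh N l *m sh (l + k)%N)) ?o // => l _.
by rewrite hdd.
Qed.

Lemma I1 N : (N < n)%N -> QQ N *m adjmx (GG N) = Sc t N.
Proof.
move=> hN.
have hN' : (N <= n)%N by apply: ltnW.
have [og oS] := orth (htN hN') (uK (leq_trans hN' (leqnSn _))).
rewrite QQ_sum GG_sum (id1 ha (gamN t N) (gamN sh N) og (oeN hN) (htN hN')).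
by rewrite oS (Sc_adj (htN hN')).
Qed.

Lemma I2 N : (N < n)%N -> GG N.+1 *m adjmx (QQ N) = - Sc sh N.
Proof.
move=> hN.
have [og _] := orth (htN hN) (uK (leq_trans hN (leqnSn _))).
have [_ oS] := orth (hshN hN) (uH (ltnW hN)).
rewrite QQ_sum GG_sum (id2 ha (gamN t N.+1) (gamN sh N) og (oeN hN)); last first.
  by move=> k hk; apply: ht; lia.
congr (- _); rewrite -[RHS](Sc_adj (hshN hN)) -oS; congr adjmx.
by apply: eq_bigr => l _; rewrite hdd.
Qed.

Lemma I3 N : (N < n)%N -> P2 a b s N a = QQ N *m mu a b s N.
Proof.
move=> hN; rewrite bP bmu /QQ.
apply: (id3 ha hdd (hshN hN) (uH (ltnW hN))).
exact: uK (leq_trans hN (leqnSn _)).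
Qed.

Lemma I4 N : (N < n)%N -> Theta1 b s N.+1 a = GG N.+1 *m (s 0%N + lambda a b s N).
Proof.
move=> hN; rewrite bT blam /GG.
apply: (id4 hdd (s 0%N) (htN hN)).
  exact: uK (leq_trans hN (leqnSn _)).
exact: uH hN.
Qed.

Lemma QQ_unit N : (N < n)%N -> QQ N \in unitmx /\ GG N \in unitmx.
Proof.
move=> hN; have hN' : (N <= n)%N by apply: ltnW.
have uS : Sc t N \in unitmx.
  exact: Sc_unit (htN hN') (uK (leq_trans hN' (leqnSn _))) (uK (hN' : (N.+1 <= n.+1)%N)).
have : QQ N *m adjmx (GG N) \in unitmx by rewrite I1.
by rewrite unitmx_mul adjmx_unit => /andP [].
Qed.

Lemma L1 N : (N < n)%N ->
  Q2 a b s N a *m mDSM a b s N = Gamma1 b s N a /\ mDSM a b s N \in unitmx.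
Proof.
move=> hN; have hN' : (N <= n)%N by apply: ltnW.
have uS : Sc t N \in unitmx.
  exact: Sc_unit (htN hN') (uK (leq_trans hN' (leqnSn _))) (uK (hN' : (N.+1 <= n.+1)%N)).
have [_ uG] := QQ_unit hN.
rewrite bQ bG -/(QQ N) -/(GG N) (mD hN'); split.
  by rewrite !mulmxA (I1 hN) mulmxV // mul1mx.
by rewrite !unitmx_mul adjmx_unit uG unitmx_inv uS.
Qed.

Lemma L2 N : (N < n)%N ->
  Gamma1 b s N.+1 a *m lDSM a b s N = - Q2 a b s N a /\ lDSM a b s N \in unitmx.
Proof.
move=> hN.
have uD : Sc sh N \in unitmx.
  exact: Sc_unit (hshN hN) (uH (ltnW hN)) (uH hN).
have [uQ _] := QQ_unit hN.
rewrite bQ bG -/(QQ N) -/(GG N.+1) (lD hN); split.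
  by rewrite !mulmxA (I2 hN) mulNmx mulmxV // !mulNmx mul1mx.
by rewrite !unitmx_mul adjmx_unit uQ unitmx_inv uD.
Qed.

Lemma Gind N : (N <= n)%N -> Gamma1 b s N a = (-1) ^+ N *: prodML a b s N.
Proof.
elim: N => [|N IH] hN; first by rewrite expr0 scale1r.
have hN' : (N < n)%N by [].
have [e2 ul] := L2 hN'; have [e1 um] := L1 hN'.
have G1 : Gamma1 b s N.+1 a = - (Q2 a b s N a *m invmx (lDSM a b s N)).
  by rewrite -mulNmx -e2 [RHS](mulmxK ul).
have Q1 : Q2 a b s N a = Gamma1 b s N a *m invmx (mDSM a b s N).
  by rewrite -e1 [RHS](mulmxK um).
have pS : prodML a b s N.+1 =
    prodML a b s N *m (invmx (mDSM a b s N) *m invmx (lDSM a b s N)) by [].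
rewrite G1 Q1 IH; last exact: ltnW.
rewrite pS exprS -scalerA scaleN1r -!scalemxAl !mulmxA.
reflexivity.
Qed.

Lemma Qform j : (j < n)%N -> Q2 a b s j a = Gamma1 b s j a *m invmx (mDSM a b s j).
Proof.
move=> hj; have [e1 um] := L1 hj.
by rewrite -e1 [RHS](mulmxK um).
Qed.

Lemma sum_mD j : \sum_(k < j.+1) mDSM a b s k = mu a b s j.
Proof.
elim: j => [|j IH]; first by rewrite big_ord1.
by rewrite big_ord_recr IH /= addrC subrK.
Qed.

Lemma sum_lD j : \sum_(k < j.+1) lDSM a b s k = lambda a b s j.
Proof.
elim: j => [|j IH]; first by rewrite big_ord1.
by rewrite big_ord_recr IH /= addrC subrK.
Qed.

Lemma mainQ j : (j < n)%N ->
  Q2 a b s j a = (-1) ^+ j *: (prodML a b s j *m invmx (mDSM a b s j)).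
Proof.
move=> hj; rewrite Qform // Gind; last exact: ltnW.
by rewrite -scalemxAl.
Qed.

Lemma mainP j : (j < n)%N ->
  P2 a b s j a = (-1) ^+ j *: (prodML a b s j *m invmx (mDSM a b s j)
                                   *m (\sum_(k < j.+1) mDSM a b s k)).
Proof.
move=> hj; rewrite I3 // /QQ -bQ mainQ // sum_mD.
by rewrite -scalemxAl.
Qed.

Lemma mainT j : (1 <= j <= n)%N ->
  Theta1 b s j a = (-1) ^+ j *: (prodML a b s j
                                   *m (s 0%N + \sum_(k < j) lDSM a b s k)).
Proof.
case: j => [//|j] /andP [_ hj].
rewrite I4 // /GG -bG Gind // sum_lD.
by rewrite -scalemxAl.
Qed.

End Final.

Lemma herm_adj (C : numClosedFieldType) (q : nat) (M : 'M[C]_q) :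
  M \is hermsymmx -> adjmx M = M.
Proof.
move/is_hermitianmxP; rewrite expr0 scale1r => h.
by rewrite /adjmx map_trmx [RHS]h.
Qed.

Unset Implicit Arguments.
Theorem mainTheorem9 (C : numClosedFieldType) (q n : nat) (a b : C)
  (s : nat -> 'M[C]_q)
  (hq : (0 < q)%N) (hn : (0 < n)%N)
  (ha : a \is Num.real) (hb : b \is Num.real) (hab : a < b)
  (hs : forall j, (j <= 2 * n + 1)%N -> s j \is hermsymmx)
  (hH1 : posdef (H1 s n))
  (hH2 : posdef (H2 a b s n.-1))
  (hK1 : posdef (K1 b s n))
  (hK2 : posdef (K2 a s n)) :
  (forall j, (j <= n.-1)%N ->
     Q2 a b s j a = (-1) ^+ j *: (prodML a b s j *m invmx (mDSM a b s j)))
  /\ (forall j, (1 <= j <= n)%N ->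
     Gamma1 b s j a = (-1) ^+ j *: prodML a b s j)
  /\ (forall j, (1 <= j <= n.-1)%N ->
     P2 a b s j a = (-1) ^+ j *: (prodML a b s j *m invmx (mDSM a b s j)
                                   *m (\sum_(k < j.+1) mDSM a b s k)))
  /\ (forall j, (1 <= j <= n)%N ->
     Theta1 b s j a = (-1) ^+ j *: (prodML a b s j
                                   *m (s 0%N + \sum_(k < j) lDSM a b s k))).
Proof.
have hS : forall k, (k <= 2 * n + 1)%N -> adjmx (s k) = s k.
  by move=> k hk; apply: herm_adj; apply: hs.
have pK : posdef (hk (tt b s) n.+1) by exact: hK1.
case: n hn hs hS hH1 hH2 hK1 hK2 pK => [//|n'] hn hs hS hH1 hH2 hK1 hK2 pK.
have pH : posdef (hk (shat a b s) n'.+1) by exact: hH2.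
split; [|split; [|split]].
- by move=> j hj; apply: (mainQ hn ha hb hS pK pH).
- by move=> j /andP [_ hj]; apply: (Gind hn ha hb hS pK pH).
- by move=> j /andP [_ hj]; apply: (mainP hn ha hb hS pK pH).
- by move=> j hj; apply: (mainT hn ha hb hS pK pH).
Qed.
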